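(* Let $\lambda=\frac{10}{9}e^{\frac{2}{3}\pi i}$ and let $F$ be the PMT with regions $R_1=\{z:|z|<\tfrac12\}$, $R_2=\widehat{\mathbb C}\setminus\overline{R_1}$ and component functions $f_1(z)=e^{\frac23\pi i}z$, $f_2(z)=\lambda(1-z)$. Then $0$ is an elliptic fixed point with $R_1$ a rotation domain, $z_0=\frac{\lambda}{\lambda+1}$ is a repelling fixed point, $\alpha(F)=\{z_0\}$, and $F$ is $\alpha$-expanding but not hyperbolic.
   Context: A PMT is a pair $(\{R_k\}_{k=1}^K,F)$ with $R_k$ nonempty, open, connected, pairwise disjoint subsets of $\widehat{\mathbb C}$ bounded by piecewise smooth simple closed curves and with $\bigcup\overline{R_k}=\widehat{\mathbb C}$, and $F|_{R_k}=f_k|_{R_k}$ for Möbius maps $f_k$, $F$ undefined on $B(F)=\bigcup\partial R_k$. $F^{-n}(A)$ is the set of $z$ with $F^j(z)\in R(F)=\bigcup R_k$ for $j<n$ and $F^n(z)\in A$; $\mathcal B(F)=\overline{\bigcup_{n\ge0}F^{-n}(B(F))}$, $\alpha(F)=\mathcal B(F)\setminus\bigcup_{n\ge0}F^{-n}(B(F))$. Periodic point $z$ of period $n$: orbit in $R(F)$, $F^n(z)=z$; classified by the multiplier $m$ of the Möbius composition $M_z=f_{k_n}\circ\cdots\circ f_{k_1}$ along the orbit: identity type if $F^n=\mathrm{id}$ near $z$, otherwise attracting $|m|<1$, repelling $|m|>1$, elliptic $|m|=1,m\ne1$, parabolic $m=1$. A rotation domain is a periodic regular component on which $F^n$ is an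 elliptic Möbius map. $F$ is hyperbolic if it has an attracting periodic point, no elliptic, parabolic or identity periodic points, no ghost-periodic points and no wandering regular components. $F$ is $\alpha$-expanding if there is $N\ge1$ with $|(F^N)'(z)|_s>1$ for all $z\in\alpha(F)$, where $|\cdot|_s$ is the spherical derivative norm and $(F^N)'(z)$ is the derivative at $z$ of the Möbius composition along the orbit of $z$. *)

(* Defs.v *)
From Stdlib Require Import Reals List.
From Coquelicot Require Import Coquelicot.
Import ListNotations.
Open Scope R_scope.

(** * The Riemann sphere: [Some z] is the finite point z, [None] is infinity. *)
Definition sphere := option C.

Definition chord (x y : sphere) : R :=
  match x, y with
  | Some z, Some w => 2 * Cmod (z - w)%C / sqrt ((1 + Cmod z ^ 2) * (1 + Cmod w ^ 2))
  | Some z, None | None, Some z => 2 / sqrt (1 + Cmod z ^ 2)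
  | None, None => 0
  end.

Definition sset := sphere -> Prop.

Definition closure (A : sset) : sset :=
  fun x => forall eps, 0 < eps -> exists y, A y /\ chord x y < eps.

Definition is_open (A : sset) : Prop :=
  forall x, A x -> exists eps, 0 < eps /\ forall y, chord x y < eps -> A y.

Definition connected (S : sset) : Prop :=
  forall U V, is_open U -> is_open V ->
    (forall x, S x -> U x \/ V x) ->
    (forall x, S x -> U x -> V x -> False) ->
    (forall x, S x -> ~ U x) \/ (forall x, S x -> ~ V x).

Definition component (Om U : sset) : Prop :=
  (exists x, U x) /\ (forall x, U x -> Om x) /\ connected U /\
  (forall W, (forall x, W x -> Om x) -> connected W ->
             (forall x, U x -> W x) -> forall x, W x -> U x).

(** * Moebius maps, given by coefficients (z |-> (a z + b)/(c z + d)). *)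
Record Mobius := Mob { ma : C; mb : C; mc : C; md : C }.

Definition mdet (M : Mobius) : C := (ma M * md M - mb M * mc M)%C.

Definition mob_apply (M : Mobius) (x : sphere) : sphere :=
  match x with
  | Some z => if Ceq_dec (mc M * z + md M)%C 0%C then None
              else Some ((ma M * z + mb M) / (mc M * z + md M))%C
  | None => if Ceq_dec (mc M) 0%C then None else Some (ma M / mc M)%C
  end.

(** Composition [mob_comp M N] = M o N (matrix product). *)
Definition mob_comp (M N : Mobius) : Mobius :=
  Mob (ma M * ma N + mb M * mc N)%C (ma M * mb N + mb M * md N)%C
      (mc M * ma N + md M * mc N)%C (mc M * mb N + md M * md N)%C.

Definition mob_id : Mobius := Mob 1%C 0%C 0%C 1%C.

(** Multiplier of M at a fixed point x (derivative M'(x) in the local chart). *)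
Definition mob_mult (M : Mobius) (x : sphere) : C :=
  match x with
  | Some z => (mdet M / ((mc M * z + md M) * (mc M * z + md M)))%C
  | None => (md M / ma M)%C
  end.

Definition sph_deriv (M : Mobius) (x : sphere) : R :=
  match x with
  | Some z => Cmod (mdet M) * (1 + Cmod z ^ 2) /
              (Cmod (ma M * z + mb M)%C ^ 2 + Cmod (mc M * z + md M)%C ^ 2)
  | None => Cmod (mdet M) / (Cmod (ma M) ^ 2 + Cmod (mc M) ^ 2)
  end.

Definition rot (u : C) : Mobius := Mob u 0%C 0%C 1%C.
Definition elliptic_mobius (M : Mobius) : Prop :=
  mdet M <> 0%C /\
  exists g u, mdet g <> 0%C /\ Cmod u = 1 /\ u <> 1%C /\
    forall x, mob_apply M (mob_apply g x) = mob_apply g (mob_apply (rot u) x).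

(** * Piecewise Moebius transformations: regions R_0..R_{K-1}, maps f_0..f_{K-1}. *)
Record PMT := MkPMT { K : nat; reg : nat -> sset; fn : nat -> Mobius }.

Definition RF (F : PMT) : sset := fun x => exists k, (k < K F)%nat /\ reg F k x.

(** B(F) = union of the boundaries of the regions; since the regions are open,
    pairwise disjoint with closures covering the sphere, this is exactly the
    complement of R(F). *)
Definition BF (F : PMT) : sset := fun x => ~ RF F x.

Fixpoint itin (F : PMT) (ks : list nat) (x : sphere) : Prop :=
  match ks with
  | [] => True
  | k :: ks' => (k < K F)%nat /\ reg F k x /\ itin F ks' (mob_apply (fn F k) x)
  end.

Fixpoint push (F : PMT) (ks : list nat) (x : sphere) : sphere :=
  match ks with
  | [] => x
  | k :: ks' => push F ks' (mob_apply (fn F k) x)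
  end.

(** Moebius composition f_{k_n} o ... o f_{k_1} along the itinerary. *)
Fixpoint comp (F : PMT) (ks : list nat) : Mobius :=
  match ks with
  | [] => mob_id
  | k :: ks' => mob_comp (comp F ks') (fn F k)
  end.

(** F^n x = y (with F^j x in R(F) for j < n). *)
Definition Fn (F : PMT) (n : nat) (x y : sphere) : Prop :=
  exists ks, length ks = n /\ itin F ks x /\ push F ks x = y.

Definition preim (F : PMT) (n : nat) (A : sset) : sset :=
  fun x => exists ks, length ks = n /\ itin F ks x /\ A (push F ks x).

Definition BBF (F : PMT) : sset := closure (fun x => exists n, preim F n (BF F) x).

Definition alphaF (F : PMT) : sset :=
  fun x => BBF F x /\ ~ (exists n, preim F n (BF F) x).

Definition periodic_with (F : PMT) (n : nat) (x : sphere) (ks : list nat) : Prop :=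
  (0 < n)%nat /\ length ks = n /\ itin F ks x /\ push F ks x = x.

Definition identity_type (F : PMT) (n : nat) (x : sphere) : Prop :=
  (exists ks, periodic_with F n x ks) /\
  exists eps, 0 < eps /\ forall y, chord x y < eps -> Fn F n y y.

Definition ptype (F : PMT) (n : nat) (x : sphere) (P : C -> Prop) : Prop :=
  exists ks, periodic_with F n x ks /\ ~ identity_type F n x /\
             P (mob_mult (comp F ks) x).

Definition attracting_m (m : C) : Prop := Cmod m < 1.
Definition repelling_m (m : C) : Prop := Cmod m > 1.
Definition elliptic_m (m : C) : Prop := Cmod m = 1 /\ m <> 1%C.
Definition parabolic_m (m : C) : Prop := m = 1%C.

Definition regular_component (F : PMT) (U : sset) : Prop :=
  component (fun x => ~ BBF F x) U.

Definition rotation_domain (F : PMT) (U : sset) : Prop :=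
  regular_component F U /\
  exists n M, (0 < n)%nat /\ elliptic_mobius M /\
    (forall x, U x -> Fn F n x (mob_apply M x) /\ U (mob_apply M x)) /\
    (forall y, U y -> exists x, U x /\ mob_apply M x = y).

Definition wandering (F : PMT) (U : sset) : Prop :=
  regular_component F U /\
  forall m n x y a b V, (m < n)%nat -> U x -> U y ->
    Fn F m x a -> Fn F n y b -> regular_component F V -> V a -> V b -> False.

(** Ghost-periodic point (definition not given in the context):
    a periodic orbit of the component maps along closures of regions that
    meets B(F). *)
Fixpoint citin (F : PMT) (ks : list nat) (x : sphere) : Prop :=
  match ks with
  | [] => True
  | k :: ks' => (k < K F)%nat /\ closure (reg F k) x /\ citin F ks' (mob_apply (fn F k) x)
  end.

Fixpoint meetsB (F : PMT) (ks : list nat) (x : sphere) : Prop :=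
  match ks with
  | [] => False
  | k :: ks' => BF F x \/ meetsB F ks' (mob_apply (fn F k) x)
  end.

Definition ghost_periodic (F : PMT) (x : sphere) : Prop :=
  exists ks, (0 < length ks)%nat /\ citin F ks x /\ push F ks x = x /\ meetsB F ks x.

Definition hyperbolic (F : PMT) : Prop :=
  (exists n x, ptype F n x attracting_m) /\
  ~ (exists n x, ptype F n x elliptic_m) /\
  ~ (exists n x, ptype F n x parabolic_m) /\
  ~ (exists n x, identity_type F n x) /\
  ~ (exists x, ghost_periodic F x) /\
  ~ (exists U, wandering F U).

Definition alpha_expanding (F : PMT) : Prop :=
  exists N, (1 <= N)%nat /\
    forall x ks, alphaF F x -> length ks = N -> itin F ks x ->
      sph_deriv (comp F ks) x > 1.

Definition omega : C := (cos (2 * PI / 3), sin (2 * PI / 3)).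
Definition lam : C := (RtoC (10 / 9) * omega)%C.

Definition Reg1 : sset := fun x => exists z, x = Some z /\ Cmod z < 1 / 2.
Definition Reg2 : sset := fun x => ~ closure Reg1 x.

Definition f1 : Mobius := Mob omega 0%C 0%C 1%C.
Definition f2 : Mobius := Mob (- lam)%C lam 0%C 1%C.

Definition regEx (k : nat) : sset := match k with 0%nat => Reg1 | _ => Reg2 end.
Definition fnEx (k : nat) : Mobius := match k with 0%nat => f1 | _ => f2 end.

Definition Fex : PMT := MkPMT 2 regEx fnEx.

Definition z0 : C := (lam / (lam + 1))%C.

(* Main.v *)
Require Import Defs.
From Stdlib Require Import Reals List Lra Psatz Classical.
From Coquelicot Require Import Coquelicot.
Import ListNotations.
Open Scope R_scope.


Lemma s3_sq : sqrt 3 * sqrt 3 = 3. Proof. apply sqrt_sqrt; lra. Qed.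
Lemma s3_pos : 0 < sqrt 3. Proof. apply sqrt_lt_R0; lra. Qed.

Ltac ceq := apply injective_projections; unfold Cmult, Cplus, Copp, Cminus, RtoC; simpl.

Lemma omega_eq : omega = ((-1/2)%R, (sqrt 3 / 2)%R).
Proof. unfold omega. replace (2*PI/3) with (2*(PI/3)) by field. rewrite cos_2PI3, sin_2PI3. reflexivity. Qed.

Lemma lam_eq : lam = ((-5/9)%R, (5*sqrt 3/9)%R).
Proof. unfold lam; rewrite omega_eq; ceq; field. Qed.

Lemma Cmod_sq x : Cmod x ^ 2 = fst x ^ 2 + snd x ^ 2.
Proof. unfold Cmod. rewrite pow2_sqrt; [auto| nra]. Qed.

Lemma Cmod_of_sq x r : 0 <= r -> Cmod x ^ 2 = r ^ 2 -> Cmod x = r.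
Proof. intros. pose proof (Cmod_ge_0 x). nra. Qed.

Lemma Cmod_omega : Cmod omega = 1.
Proof. apply Cmod_of_sq; [lra|]. rewrite Cmod_sq, omega_eq; simpl. pose proof s3_sq. nra. Qed.

Lemma Cmod_lam : Cmod lam = 10/9.
Proof. apply Cmod_of_sq; [lra|]. rewrite Cmod_sq, lam_eq; simpl. pose proof s3_sq. nra. Qed.

Lemma lam1_neq : (lam + 1)%C <> 0%C.
Proof. rewrite lam_eq. intro H. apply (f_equal fst) in H. unfold Cplus in H; simpl in H. lra. Qed.

Lemma lam_neq0 : lam <> 0%C.
Proof. rewrite lam_eq. intro H. apply (f_equal fst) in H. simpl in H. lra. Qed.

Lemma omega_neq0 : omega <> 0%C.
Proof. rewrite omega_eq. intro H. apply (f_equal fst) in H. simpl in H. lra. Qed.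

Lemma omega_neq1 : omega <> 1%C.
Proof. rewrite omega_eq. intro H. apply (f_equal fst) in H. simpl in H. lra. Qed.

Lemma z0_eq : z0 = ((55/91)%R, (45*sqrt 3/91)%R).
Proof.
  unfold z0. pose proof lam1_neq.
  assert (H1 : (((55/91)%R, (45*sqrt 3/91)%R) * (lam + 1))%C = lam).
  { rewrite lam_eq. pose proof s3_sq. ceq; nra. }
  revert H1. generalize (((55/91)%R, (45*sqrt 3/91)%R) : C). intros w H1.
  rewrite <- H1 at 1. field. auto.
Qed.

Lemma Cmod_z0_sq : Cmod z0 ^ 2 = 100/91.
Proof. rewrite Cmod_sq, z0_eq; simpl. pose proof s3_sq. nra. Qed.

Lemma Cmod_z0_gt : Cmod z0 > 1/2.
Proof. pose proof Cmod_z0_sq. pose proof (Cmod_ge_0 z0). nra. Qed.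

Definition f2c (v : C) : C := (lam * (1 - v))%C.

Lemma f2c_z0 v : (f2c v - z0 = - lam * (v - z0))%C.
Proof. unfold f2c, z0. pose proof lam1_neq. field. auto. Qed.

Lemma f2c_diff v u : (f2c v - f2c u = - lam * (v - u))%C.
Proof. unfold f2c. ring. Qed.

Lemma f2_some v : mob_apply f2 (Some v) = Some (f2c v).
Proof. unfold mob_apply, f2; simpl. destruct (Ceq_dec _ _) as [e|e].
  - exfalso. apply (f_equal fst) in e. unfold Cmult, Cplus in e; simpl in e. lra.
  - f_equal. unfold f2c. field. Qed.

Lemma f2_none : mob_apply f2 None = None.
Proof. unfold mob_apply, f2; simpl. destruct (Ceq_dec _ _) as [e|e]; auto; now destruct e. Qed.

Lemma f1_some v : mob_apply f1 (Some v) = Some (omega * v)%C.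
Proof. unfold mob_apply, f1; simpl. destruct (Ceq_dec _ _) as [e|e].
  - exfalso. apply (f_equal fst) in e. unfold Cmult, Cplus in e; simpl in e. lra.
  - f_equal. field. Qed.

Lemma f1_none : mob_apply f1 None = None.
Proof. unfold mob_apply, f1; simpl. destruct (Ceq_dec _ _) as [e|e]; auto; now destruct e. Qed.


Lemma div_lt_mul x S e : 0 < S -> x / S < e -> x < e * S.
Proof. intros HS H. replace x with ((x / S) * S) by (field; lra). nra. Qed.

Lemma Cmod_sub_sym z w : Cmod (z - w) = Cmod (w - z).
Proof. replace (z - w)%C with (- (w - z))%C by ring. apply Cmod_opp. Qed.

Lemma Cmod_rev_tri z w : Cmod w - Cmod z <= Cmod (z - w).
Proof. rewrite Cmod_sub_sym. replace w with ((w - z) + z)%C at 1 by ring.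
  pose proof (Cmod_triangle (w - z) z). lra. Qed.

Lemma chord_sym x y : chord x y = chord y x.
Proof. destruct x, y; unfold chord; auto. rewrite Cmod_sub_sym, (Rmult_comm (1 + Cmod c ^ 2)). reflexivity. Qed.

Lemma chord_self x : chord x x = 0.
Proof. destruct x; unfold chord; auto. replace (c - c)%C with (RtoC 0) by ring. rewrite Cmod_0. unfold Rdiv. ring. Qed.

Lemma sqrt_sq_eq p : 0 <= p -> sqrt p * sqrt p = p.
Proof. apply sqrt_sqrt. Qed.

Lemma chord_le z w : chord (Some z) (Some w) <= 2 * Cmod (z - w).
Proof.
  unfold chord. set (m := Cmod (z - w)). pose proof (Cmod_ge_0 (z - w)).
  set (P := (1 + Cmod z ^ 2) * (1 + Cmod w ^ 2)).
  assert (HP : 1 <= P) by (unfold P; pose proof (pow2_ge_0 (Cmod z)); pose proof (pow2_ge_0 (Cmod w)); nra).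
  assert (HS : 1 <= sqrt P) by (rewrite <- sqrt_1; apply sqrt_le_1_alt; lra).
  assert (Hi : / sqrt P <= 1) by (rewrite <- Rinv_1; apply Rinv_le_contravar; lra).
  assert (0 < / sqrt P) by (apply Rinv_0_lt_compat; lra).
  assert (0 <= m) by apply Cmod_ge_0. unfold Rdiv. nra.
Qed.

Lemma ball_some z d : 0 < d -> exists eps, 0 < eps /\
  forall y, chord (Some z) y < eps -> exists v, y = Some v /\ Cmod (z - v) < d.
Proof.
  intros Hd. set (a := Cmod z). assert (Ha : 0 <= a) by apply Cmod_ge_0.
  exists (Rmin (1 / (1 + a)) (d / (1 + a) ^ 2)).
  assert (He1 : Rmin (1 / (1 + a)) (d / (1 + a) ^ 2) <= 1 / (1 + a)) by apply Rmin_l.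
  assert (He2 : Rmin (1 / (1 + a)) (d / (1 + a) ^ 2) <= d / (1 + a) ^ 2) by apply Rmin_r.
  set (eps := Rmin (1 / (1 + a)) (d / (1 + a) ^ 2)) in *.
  assert (Hpos : 0 < eps).
  { assert (0 < 1 / (1 + a)) by (apply Rdiv_lt_0_compat; lra).
    assert (0 < d / (1 + a) ^ 2) by (apply Rdiv_lt_0_compat; [lra| apply pow_lt; lra]).
    unfold eps. apply Rmin_glb_lt; auto. }
  assert (He1' : eps * (1 + a) <= 1).
  { replace 1 with (1 / (1 + a) * (1 + a)) at 2 by (field; lra). nra. }
  assert (He2' : eps * (1 + a) ^ 2 <= d).
  { replace d with (d / (1 + a) ^ 2 * (1 + a) ^ 2) by (field; nra). nra. }
  split; auto. intros y Hy. destruct y as [w|].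
  - exists w. split; auto. unfold chord in Hy. fold a in Hy.
    set (t := Cmod w) in *. set (m := Cmod (z - w)) in *.
    assert (Ht : 0 <= t) by apply Cmod_ge_0.
    assert (Hm : 0 <= m) by apply Cmod_ge_0.
    assert (Hmt : t - a <= m) by apply Cmod_rev_tri.
    set (P := (1 + a ^ 2) * (1 + t ^ 2)) in *.
    assert (HP : 0 <= P) by (unfold P; nra).
    assert (HS2 : sqrt P * sqrt P = P) by (apply sqrt_sqrt; auto).
    assert (HS : 0 < sqrt P) by (apply sqrt_lt_R0; unfold P; nra).
    apply div_lt_mul in Hy; auto.
    assert (H4 : 4 * m ^ 2 < eps ^ 2 * P) by nra.
    assert (Hq0 : 0 <= eps * (1 + a)) by nra.
    assert (Hq : (eps * (1 + a)) ^ 2 <= 1) by nra.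
    assert (Hea : eps ^ 2 * (1 + a ^ 2) <= 1) by nra.
    assert (Ht2 : t < 2 * a + 1).
    { destruct (Rlt_or_le t (2 * a + 1)) as [|Hc]; auto. exfalso.
      assert (4 * m ^ 2 >= (t + 1) ^ 2) by nra.
      assert (eps ^ 2 * P <= 1 + t ^ 2).
      { unfold P. replace (eps ^ 2 * ((1 + a ^ 2) * (1 + t ^ 2))) with ((eps ^ 2 * (1 + a ^ 2)) * (1 + t ^ 2)) by ring.
        assert (0 <= 1 + t ^ 2) by nra.
        pose proof (Rmult_le_compat_r (1 + t ^ 2) _ _ H0 Hea). lra. }
      nra. }
    assert (A1 : 1 + a ^ 2 <= (1 + a) ^ 2) by nra.
    assert (A2 : 1 + t ^ 2 <= 4 * (1 + a) ^ 2) by nra.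
    assert (A3 : P <= (1 + a) ^ 2 * (4 * (1 + a) ^ 2)).
    { unfold P. apply Rmult_le_compat; nra. }
    assert (eps ^ 2 * P <= (eps * (1 + a) ^ 2) ^ 2 * 4).
    { replace ((eps * (1 + a) ^ 2) ^ 2 * 4) with (eps ^ 2 * ((1 + a) ^ 2 * (4 * (1 + a) ^ 2))) by ring.
      apply Rmult_le_compat_l; nra. }
    assert (m < eps * (1 + a) ^ 2) by nra. lra.
  - exfalso. unfold chord in Hy. fold a in Hy.
    assert (HS2 : sqrt (1 + a ^ 2) * sqrt (1 + a ^ 2) = 1 + a ^ 2) by (apply sqrt_sqrt; nra).
    assert (HS : 0 < sqrt (1 + a ^ 2)) by (apply sqrt_lt_R0; nra).
    apply div_lt_mul in Hy; auto. nra.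
Qed.

Lemma chord_None_big Rr v : 0 <= Rr -> chord None (Some v) < 2 / sqrt (1 + Rr ^ 2) -> Rr < Cmod v.
Proof.
  intros HR H. unfold chord in H. set (t := Cmod v) in *. pose proof (Cmod_ge_0 v).
  assert (A1 : 0 < sqrt (1 + Rr ^ 2)) by (apply sqrt_lt_R0; nra).
  assert (A2 : 0 < sqrt (1 + t ^ 2)) by (apply sqrt_lt_R0; nra).
  assert (sqrt (1 + Rr ^ 2) < sqrt (1 + t ^ 2)).
  { destruct (Rlt_or_le (sqrt (1 + Rr ^ 2)) (sqrt (1 + t ^ 2))) as [|Hc]; auto. exfalso.
    assert (/ sqrt (1 + Rr ^ 2) <= / sqrt (1 + t ^ 2)) by (apply Rinv_le_contravar; lra).
    unfold Rdiv in H. lra. }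
  apply sqrt_lt_0_alt in H1. assert (0 <= t) by apply Cmod_ge_0. nra.
Qed.


Lemma Cmod_scal s w : Cmod (RtoC s * w) = Rabs s * Cmod w.
Proof. rewrite Cmod_mult, Cmod_R. auto. Qed.

Lemma closure_Reg1 x : closure Reg1 x <-> exists w, x = Some w /\ Cmod w <= 1/2.
Proof.
  split.
  - intros H. destruct x as [w|].
    + exists w; split; auto. destruct (Rle_dec (Cmod w) (1/2)) as [|Hn]; auto. exfalso.
      destruct (ball_some w (Cmod w - 1/2)) as [eps [He Hb]]; [lra|].
      destruct (H eps He) as [y [[z [-> Hz]] Hc]].
      destruct (Hb _ Hc) as [v [Hv Hd]]. injection Hv as ->.
      pose proof (Cmod_rev_tri v w). rewrite Cmod_sub_sym in Hd. lra.
    + exfalso. assert (He : 0 < 2 / sqrt (1 + (1/2) ^ 2)).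
      { apply Rdiv_lt_0_compat; [lra| apply sqrt_lt_R0; nra]. }
      destruct (H _ He) as [y [[z [-> Hz]] Hc]].
      apply chord_None_big in Hc; lra.
  - intros [w [-> Hw]] eps He.
    set (s := 1 - Rmin 1 eps / 2).
    assert (H1 : Rmin 1 eps <= 1) by apply Rmin_l.
    assert (H2 : Rmin 1 eps <= eps) by apply Rmin_r.
    assert (H3 : 0 < Rmin 1 eps) by (apply Rmin_glb_lt; lra).
    pose proof (Cmod_ge_0 w).
    exists (Some (RtoC s * w)%C). split.
    + exists (RtoC s * w)%C. split; auto. rewrite Cmod_scal. rewrite Rabs_pos_eq; unfold s; nra.
    + eapply Rle_lt_trans; [apply chord_le|].
      replace (w - RtoC s * w)%C with (RtoC (1 - s) * w)%C by (ceq; ring).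
      rewrite Cmod_scal. rewrite Rabs_pos_eq; unfold s; nra.
Qed.

Lemma Reg1_closure x : Reg1 x -> closure Reg1 x.
Proof. intros [w [-> Hw]]. apply closure_Reg1. exists w; split; auto; lra. Qed.

Lemma Reg2_iff x : Reg2 x <-> x = None \/ exists w, x = Some w /\ Cmod w > 1/2.
Proof.
  unfold Reg2. rewrite closure_Reg1. split.
  - intros H. destruct x as [w|]; auto. right. exists w. split; auto.
    destruct (Rle_dec (Cmod w) (1/2)) as [Hl|Hl]; [exfalso; apply H; eauto| lra].
  - intros [-> | [w [-> Hw]]] [w' [Hw' Hl]]; [discriminate|]. injection Hw' as ->. lra.
Qed.

Lemma RF_iff x : RF Fex x <-> Reg1 x \/ Reg2 x.
Proof.
  unfold RF; simpl. split.
  - intros [k [Hk Hr]]. destruct k as [|k]; simpl in Hr; auto.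
  - intros [H|H]; [exists 0%nat | exists 1%nat]; simpl; split; auto.
Qed.

Lemma BF_iff x : BF Fex x <-> exists w, x = Some w /\ Cmod w = 1/2.
Proof.
  unfold BF. rewrite RF_iff, Reg2_iff. split.
  - intros H. destruct x as [w|].
    + exists w; split; auto.
      destruct (Rtotal_order (Cmod w) (1/2)) as [Hl|[Hl|Hl]]; auto; exfalso; apply H.
      * left. exists w. auto.
      * right. right. exists w. split; auto.
    + exfalso. apply H. auto.
  - intros [w [-> Hw]] [[w' [Hw' Hl]]|[Hn|[w' [Hw' Hl]]]]; try discriminate;
      injection Hw' as ->; lra.
Qed.

Lemma Reg1_open : is_open Reg1.
Proof.
  intros x [z [-> Hz]]. destruct (ball_some z (1/2 - Cmod z)) as [eps [He Hb]]; [lra|].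
  exists eps. split; auto. intros y Hy. destruct (Hb _ Hy) as [v [-> Hv]].
  exists v. split; auto. pose proof (Cmod_rev_tri z v). lra.
Qed.

Lemma Reg2_open : is_open Reg2.
Proof.
  intros x Hx. apply Reg2_iff in Hx. destruct Hx as [-> | [w [-> Hw]]].
  - exists (2 / sqrt (1 + 1 ^ 2)). split.
    { apply Rdiv_lt_0_compat; [lra| apply sqrt_lt_R0; nra]. }
    intros y Hy. apply Reg2_iff. destruct y as [v|]; auto. right. exists v. split; auto.
    apply chord_None_big in Hy; lra.
  - destruct (ball_some w (Cmod w - 1/2)) as [eps [He Hb]]; [lra|].
    exists eps. split; auto. intros y Hy. destruct (Hb _ Hy) as [v [-> Hv]].
    apply Reg2_iff. right. exists v. split; auto.
    pose proof (Cmod_rev_tri v w). rewrite Cmod_sub_sym in Hv. lra.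
Qed.

Section Seg.
Variables (U V : sset) (z : C).
Hypotheses (HU : is_open U) (HV : is_open V)
  (Hcov : forall x, Reg1 x -> U x \/ V x)
  (Hdis : forall x, Reg1 x -> U x -> V x -> False)
  (H0 : U (Some (RtoC 0))) (Hz : Cmod z < 1/2).

Let p (t : R) : sphere := Some (RtoC t * z)%C.

Let pR t : 0 <= t <= 1 -> Reg1 (p t).
Proof. intros Ht. exists (RtoC t * z)%C. split; auto. rewrite Cmod_scal.
  pose proof (Cmod_ge_0 z). rewrite Rabs_pos_eq; nra. Qed.

Let pch t s : chord (p t) (p s) <= Rabs (t - s).
Proof. unfold p. eapply Rle_trans; [apply chord_le|].
  replace (RtoC t * z - RtoC s * z)%C with (RtoC (t - s) * z)%C by (ceq; ring).
  rewrite Cmod_scal. pose proof (Rabs_pos (t - s)). pose proof (Cmod_ge_0 z). nra. Qed.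

Let p0 : p 0 = Some (RtoC 0).
Proof. unfold p. f_equal. ceq; ring. Qed.

Let p1 : p 1 = Some z.
Proof. unfold p. f_equal. ceq; ring. Qed.

Lemma seg_U : U (Some z).
Proof.
  set (E := fun t => 0 <= t <= 1 /\ forall s, 0 <= s <= t -> U (p s)).
  assert (E0 : E 0). { split; [lra|]. intros s Hs. replace s with 0 by lra. rewrite p0. auto. }
  assert (Eb : bound E). { exists 1. intros t [Ht _]. lra. }
  destruct (completeness E Eb (ex_intro _ 0 E0)) as [T [HT1 HT2]].
  assert (T0 : 0 <= T) by (apply HT1; auto).
  assert (T1 : T <= 1). { apply HT2. intros t [Ht _]. lra. }
  assert (below : forall s, 0 <= s < T -> U (p s)).
  { intros s Hs. apply NNPP. intros HUs.
    assert (T <= s); [|lra]. apply HT2. intros t Et.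
    destruct (Rle_dec t s) as [|Hn]; auto. exfalso. apply HUs. apply Et. lra. }
  destruct (Hcov (p T) (pR T ltac:(lra))) as [HUT|HVT].
  - destruct (HU _ HUT) as [eps [He Hb]].
    destruct (Rlt_or_le T 1) as [Hlt|Hge].
    + exfalso. set (t' := Rmin 1 (T + eps / 2)).
      assert (A1 : t' <= 1) by apply Rmin_l.
      assert (A2 : t' <= T + eps / 2) by apply Rmin_r.
      assert (A3 : T < t') by (apply Rmin_glb_lt; lra).
      assert (Et : E t').
      { split; [lra|]. intros s Hs. destruct (Rlt_or_le s T) as [Hl|Hl].
        - apply below. lra.
        - apply Hb. eapply Rle_lt_trans; [apply pch|]. rewrite Rabs_left1; lra. }
      apply HT1 in Et. lra.
    + replace T with 1 in HUT by lra. rewrite p1 in HUT. auto.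
  - exfalso. destruct (HV _ HVT) as [eps [He Hb]].
    destruct (Req_dec T 0) as [HT0|HT0].
    + subst T. rewrite p0 in HVT. apply (Hdis (Some (RtoC 0))); auto.
      rewrite <- p0. apply pR. lra.
    + set (s := T - Rmin T eps / 2).
      assert (A1 : Rmin T eps <= T) by apply Rmin_l.
      assert (A2 : Rmin T eps <= eps) by apply Rmin_r.
      assert (A3 : 0 < Rmin T eps) by (apply Rmin_glb_lt; lra).
      apply (Hdis (p s)); [apply pR; unfold s; lra | apply below; unfold s; lra |].
      apply Hb. eapply Rle_lt_trans; [apply pch|]. rewrite Rabs_pos_eq; unfold s; lra.
Qed.
End Seg.

Lemma Reg1_connected : connected Reg1.
Proof.
  intros U V HU HV Hcov Hdis.
  assert (R0 : Reg1 (Some (RtoC 0))).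
  { exists (RtoC 0). split; auto. rewrite Cmod_0. lra. }
  destruct (Hcov _ R0) as [H0|H0].
  - right. intros x [z [-> Hz]] HVx. apply (Hdis (Some z)); auto.
    + exists z; auto.
    + eapply seg_U; eauto.
  - left. intros x [z [-> Hz]] HUx. apply (Hdis (Some z)); auto.
    + exists z; auto.
    + apply (seg_U V U z HV HU); auto.
      * intros x Hx. destruct (Hcov x Hx); auto.
      * intros x Hx Ha Hb. eapply Hdis; eauto.
Qed.


Lemma Cmod_omega_mul z : Cmod (omega * z) = Cmod z.
Proof. rewrite Cmod_mult, Cmod_omega. ring. Qed.

Lemma Reg1_f1 x : Reg1 x -> Reg1 (mob_apply f1 x).
Proof. intros [z [-> Hz]]. rewrite f1_some. exists (omega * z)%C. split; auto. now rewrite Cmod_omega_mul. Qed.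

Lemma Reg1_not_Reg2 x : Reg1 x -> ~ Reg2 x.
Proof. intros H H2. apply H2. now apply Reg1_closure. Qed.

Lemma Reg1_itin ks y : Reg1 y -> itin Fex ks y -> Reg1 (push Fex ks y).
Proof.
  revert y. induction ks as [|k ks IH]; intros y Hy Hi; simpl in *; auto.
  destruct Hi as [Hk [Hr Hi]]. destruct k as [|k].
  - apply IH; auto. apply Reg1_f1; auto.
  - exfalso. apply (Reg1_not_Reg2 y); auto.
Qed.

Fixpoint gi (n : nat) (v : C) : C :=
  match n with O => v | S n => gi n (f2c v) end.

Lemma G1 n v : Cmod (gi n v - z0) = (10/9) ^ n * Cmod (v - z0).
Proof.
  revert v. induction n as [|n IH]; intros v; simpl. ring.
  rewrite IH, f2c_z0, Cmod_mult, Cmod_opp, Cmod_lam. ring.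
Qed.

Lemma G2 n v u : Cmod (gi n v - gi n u) = (10/9) ^ n * Cmod (v - u).
Proof.
  revert v u. induction n as [|n IH]; intros v u; simpl. ring.
  rewrite IH, f2c_diff, Cmod_mult, Cmod_opp, Cmod_lam. ring.
Qed.

Lemma P_char ks y : itin Fex ks y -> BF Fex (push Fex ks y) ->
  exists v, y = Some v /\ (forall j, (j < length ks)%nat -> Cmod (gi j v) > 1/2) /\
            Cmod (gi (length ks) v) = 1/2.
Proof.
  revert y. induction ks as [|k ks IH]; intros y Hi HB; simpl in *.
  - apply BF_iff in HB. destruct HB as [w [-> Hw]]. exists w. split; auto. split; auto.
    intros j Hj. lia.
  - destruct Hi as [Hk [Hr Hi]]. destruct k as [|k].
    + exfalso. apply Reg1_f1 in Hr. pose proof (Reg1_itin _ _ Hr Hi).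
      apply HB. apply RF_iff. auto.
    + destruct (IH _ Hi HB) as [v' [Hv' [Hlt Heq]]].
      destruct y as [v|].
      * rewrite f2_some in Hv'. injection Hv' as <-.
        exists v. split; auto. split; auto.
        intros j Hj. destruct j as [|j]; simpl.
        -- apply Reg2_iff in Hr. destruct Hr as [Hr|[w [Hw Hw2]]]; [discriminate|].
           injection Hw as <-. auto.
        -- apply Hlt. lia.
      * change (fnEx (S k)) with f2 in Hv'. rewrite f2_none in Hv'. discriminate.
Qed.

Lemma mk_itin n v : (forall j, (j < n)%nat -> Cmod (gi j v) > 1/2) ->
  itin Fex (repeat 1%nat n) (Some v) /\ push Fex (repeat 1%nat n) (Some v) = Some (gi n v).
Proof.
  revert v. induction n as [|n IH]; intros v H; [simpl; auto|].
  cbn [repeat itin push]. change (fn Fex 1) with f2. change (reg Fex 1) with Reg2. rewrite f2_some. destruct (IH (f2c v)) as [H1 H2].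
  { intros j Hj. apply (H (S j)). lia. }
  split; auto. split; [simpl; lia|]. split; auto.
  apply Reg2_iff. right. exists v. split; auto. apply (H 0%nat). lia.
Qed.

Definition Pset (y : sphere) : Prop := exists n, preim Fex n (BF Fex) y.

Lemma Pset_char y : Pset y -> exists v n, y = Some v /\
  (forall j, (j < n)%nat -> Cmod (gi j v) > 1/2) /\ Cmod (gi n v) = 1/2.
Proof.
  intros [n [ks [Hl [Hi HB]]]]. destruct (P_char ks y Hi HB) as [v [Hv [H1 H2]]].
  exists v, (length ks). auto.
Qed.

Lemma Pset_mk v n : (forall j, (j < n)%nat -> Cmod (gi j v) > 1/2) -> Cmod (gi n v) = 1/2 ->
  Pset (Some v).
Proof.
  intros H1 H2. destruct (mk_itin n v H1) as [Hi Hp]. exists n, (repeat 1%nat n).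
  split; [apply repeat_length|]. split; auto. rewrite Hp. apply BF_iff. eauto.
Qed.


Lemma tri3 a b c : Cmod (a - c) <= Cmod (a - b) + Cmod (b - c).
Proof. replace (a - c)%C with ((a - b) + (b - c))%C by ring. apply Cmod_triangle. Qed.

Lemma Cmod_sub_ge a b : Cmod a - Cmod b <= Cmod (a - b).
Proof. rewrite Cmod_sub_sym. apply Cmod_rev_tri. Qed.

Lemma Pset_ge v : Pset (Some v) -> Cmod v >= 1/2.
Proof.
  intros H. destruct (Pset_char _ H) as [v' [n [Hv [H1 H2]]]]. injection Hv as <-.
  destruct n as [|n]; simpl in H2. lra. specialize (H1 0%nat ltac:(lia)). simpl in H1. lra.
Qed.

Lemma BBF_eq x : BBF Fex x = closure Pset x.
Proof. reflexivity. Qed.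

Lemma Reg1_notBBF x : Reg1 x -> ~ BBF Fex x.
Proof.
  intros [z [-> Hz]] HB. rewrite BBF_eq in HB.
  destruct (ball_some z (1/2 - Cmod z)) as [eps [He Hb]]; [lra|].
  destruct (HB eps He) as [y [Py Hc]]. destruct (Hb _ Hc) as [v [-> Hv]].
  apply Pset_ge in Py. pose proof (Cmod_rev_tri z v). lra.
Qed.

Lemma gi_z0 n : gi n z0 = z0.
Proof.
  pose proof (G1 n z0). replace (z0 - z0)%C with (RtoC 0) in H by ring.
  rewrite Cmod_0, Rmult_0_r in H. apply Cmod_eq_0 in H.
  replace (gi n z0) with ((gi n z0 - z0) + z0)%C by ring. rewrite H. ring.
Qed.

Lemma z0_notP : ~ Pset (Some z0).
Proof.
  intros H. destruct (Pset_char _ H) as [v [n [Hv [_ H2]]]]. injection Hv as <-.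
  rewrite gi_z0 in H2. pose proof Cmod_z0_gt. lra.
Qed.

Definition hmap (u : C) : C := (1 - u / lam)%C.

Lemma f2c_h u : f2c (hmap u) = u.
Proof. unfold f2c, hmap. pose proof lam_neq0. field. auto. Qed.

Lemma h_z0 u : Cmod (hmap u - z0) = (9/10) * Cmod (u - z0).
Proof.
  assert (E : (hmap u - z0 = (u - z0) * (- / lam))%C).
  { unfold hmap, z0. pose proof lam_neq0. pose proof lam1_neq. field. auto. }
  rewrite E, Cmod_mult, Cmod_opp, Cmod_inv by apply lam_neq0. rewrite Cmod_lam. field.
Qed.

Lemma p910 k : 0 <= (9/10) ^ k <= 1.
Proof. induction k; simpl; nra. Qed.

Section Back.
Let r := (1/2) / Cmod z0.
Let w : C := (z0 * RtoC r)%C.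
Let d := Cmod z0 - 1/2.

Let Hr : 0 < r < 1.
Proof. pose proof Cmod_z0_gt. unfold r. split. apply Rdiv_lt_0_compat; lra.
  apply Rmult_lt_reg_r with (Cmod z0); [lra|]. unfold Rdiv. rewrite Rmult_assoc, Rinv_l; lra. Qed.

Let Hw : Cmod w = 1/2.
Proof. unfold w. rewrite Cmod_mult, Cmod_R, Rabs_pos_eq by lra. unfold r. pose proof Cmod_z0_gt. field. lra. Qed.

Let Hwd : Cmod (w - z0) = d.
Proof.
  unfold w. replace (z0 * RtoC r - z0)%C with (z0 * RtoC (r - 1))%C by (ceq; ring).
  rewrite Cmod_mult, Cmod_R, Rabs_left1 by lra. unfold d, r. pose proof Cmod_z0_gt. field. lra.
Qed.

Fixpoint hk (k : nat) : C := match k with O => w | S k => hmap (hk k) end.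

Lemma hk_dist k : Cmod (hk k - z0) = (9/10) ^ k * d.
Proof. induction k; simpl. rewrite Hwd. ring. rewrite h_z0, IHk. ring. Qed.

Lemma hk_big k : (1 <= k)%nat -> Cmod (hk k) > 1/2.
Proof.
  intros Hk. pose proof (hk_dist k). pose proof (Cmod_sub_ge z0 (hk k)).
  rewrite Cmod_sub_sym in H. pose proof Cmod_z0_gt.
  assert ((9/10) ^ k < 1). { destruct k; [lia|]. simpl. pose proof (p910 k). nra. }
  assert (Hdd : d = Cmod z0 - 1/2) by reflexivity.
  assert (0 < d) by lra. nra.
Qed.

Lemma hk_itin k : itin Fex (repeat 1%nat k) (Some (hk k)) /\ push Fex (repeat 1%nat k) (Some (hk k)) = Some w.
Proof.
  induction k as [|k IH]; [simpl; auto|].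
  cbn [repeat itin push]. change (fn Fex 1) with f2. change (reg Fex 1) with Reg2.
  change (hk (S k)) with (hmap (hk k)). rewrite f2_some, f2c_h. destruct IH as [H1 H2].
  split; auto. split; [simpl; lia|]. split; auto.
  apply Reg2_iff. right. exists (hmap (hk k)). split; auto. apply (hk_big (S k)). lia.
Qed.

Lemma z0_closure : BBF Fex (Some z0).
Proof.
  rewrite BBF_eq. intros eps He.
  assert (Hd : 0 < d) by (unfold d; pose proof Cmod_z0_gt; lra).
  destruct (pow_lt_1_zero (9/10) ltac:(rewrite Rabs_pos_eq; lra) (eps / (2 * d + 1)))
    as [N HN]. { apply Rdiv_lt_0_compat; lra. }
  specialize (HN (S N) ltac:(lia)). rewrite Rabs_pos_eq in HN by (apply pow_le; lra).
  exists (Some (hk (S N))). split.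
  - exists (S N), (repeat 1%nat (S N)). split; [apply repeat_length|].
    destruct (hk_itin (S N)) as [H1 H2]. split; auto. rewrite H2. apply BF_iff. eauto.
  - eapply Rle_lt_trans; [apply chord_le|]. rewrite Cmod_sub_sym, hk_dist.
    assert ((9/10)^(S N) * (2 * d + 1) < eps).
    { apply Rmult_lt_reg_r with (/ (2 * d + 1)). apply Rinv_0_lt_compat; lra.
      rewrite Rmult_assoc, Rinv_r by lra. lra. }
    assert (0 <= (9/10)^(S N)) by (apply pow_le; lra). nra.
Qed.
End Back.


Lemma p109 k : 1 <= (10/9) ^ k.
Proof. induction k; simpl; nra. Qed.

Lemma p109_mono n m : (n <= m)%nat -> (10/9) ^ n <= (10/9) ^ m.
Proof. intros. apply Rle_pow; auto; lra. Qed.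

Section Main.
Variable u : C.
Hypothesis Hu : Cmod u > 1/2.
Hypothesis Huz : u <> z0.
Hypothesis HnP : ~ Pset (Some u).

Let NP n : (forall j, (j < n)%nat -> Cmod (gi j u) > 1/2) -> Cmod (gi n u) <> 1/2.
Proof. intros H1 H2. apply HnP. eapply Pset_mk; eauto. Qed.

Lemma dich N : (forall j, (j <= N)%nat -> Cmod (gi j u) > 1/2) \/
  (exists m, (m <= N)%nat /\ (forall j, (j < m)%nat -> Cmod (gi j u) > 1/2) /\ Cmod (gi m u) < 1/2).
Proof.
  induction N as [|N IH].
  - left. intros j Hj. replace j with 0%nat by lia. simpl. auto.
  - destruct IH as [H|[m [Hm [H1 H2]]]].
    + destruct (Rtotal_order (Cmod (gi (S N) u)) (1/2)) as [Hl|[Hl|Hl]].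
      * right. exists (S N). split; auto. split; auto. intros j Hj. apply H. lia.
      * exfalso. apply (NP (S N)); auto. intros j Hj. apply H. lia.
      * left. intros j Hj. destruct (Nat.eq_dec j (S N)) as [->|]; auto. apply H. lia.
    + right. exists m. split; [lia|]. auto.
Qed.

Lemma stab1 j : Cmod (gi j u) <> 1/2 -> exists del, 0 < del /\ forall v, Cmod (v - u) < del ->
  (Cmod (gi j u) > 1/2 -> Cmod (gi j v) > 1/2) /\ (Cmod (gi j u) < 1/2 -> Cmod (gi j v) < 1/2).
Proof.
  intros Hne. set (mu := Rabs (Cmod (gi j u) - 1/2)).
  assert (Hmu : 0 < mu) by (apply Rabs_pos_lt; lra).
  pose proof (p109 j).
  exists (mu / (10/9)^j). split. apply Rdiv_lt_0_compat; lra.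
  intros v Hv. pose proof (G2 j v u).
  assert (Hlt : Cmod (gi j v - gi j u) < mu).
  { rewrite H0. apply Rmult_lt_reg_r with (/ (10/9)^j). apply Rinv_0_lt_compat; lra.
    replace ((10/9)^j * Cmod (v - u) * / (10/9)^j) with (Cmod (v - u)) by (field; lra). exact Hv. }
  pose proof (Cmod_sub_ge (gi j v) (gi j u)). pose proof (Cmod_sub_ge (gi j u) (gi j v)).
  rewrite Cmod_sub_sym in H2.
  split; intros Hc; unfold mu in Hlt; [rewrite Rabs_pos_eq in Hlt by lra | rewrite Rabs_left in Hlt by lra]; lra.
Qed.

Lemma stab k : (forall j, (j <= k)%nat -> Cmod (gi j u) <> 1/2) ->
  exists del, 0 < del /\ forall v, Cmod (v - u) < del -> forall j, (j <= k)%nat ->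
  (Cmod (gi j u) > 1/2 -> Cmod (gi j v) > 1/2) /\ (Cmod (gi j u) < 1/2 -> Cmod (gi j v) < 1/2).
Proof.
  induction k as [|k IH]; intros H.
  - destruct (stab1 0%nat (H 0%nat ltac:(lia))) as [del [Hd Hb]].
    exists del. split; auto. intros v Hv j Hj. replace j with 0%nat by lia. auto.
  - destruct IH as [d1 [Hd1 Hb1]]. { intros j Hj. apply H. lia. }
    destruct (stab1 (S k) (H (S k) ltac:(lia))) as [d2 [Hd2 Hb2]].
    exists (Rmin d1 d2). split. apply Rmin_glb_lt; auto.
    intros v Hv j Hj. pose proof (Rmin_l d1 d2). pose proof (Rmin_r d1 d2).
    destruct (Nat.eq_dec j (S k)) as [->|]. apply Hb2; lra. apply Hb1; [lra|lia].
Qed.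

Lemma main_not_closure : ~ closure Pset (Some u).
Proof.
  intros HC.
  set (dd := Cmod (u - z0)).
  assert (Hdd : 0 < dd).
  { apply Cmod_gt_0. intro E. apply Huz. replace u with ((u - z0) + z0)%C by ring. rewrite E. ring. }
  set (Rm := Cmod z0 + 1/2).
  destruct (Pow_x_infinity (10/9) ltac:(rewrite Rabs_pos_eq; lra) ((Rm + 1) / dd)) as [N HN].
  specialize (HN N ltac:(lia)). rewrite Rabs_pos_eq in HN by (apply pow_le; lra).
  assert (HgN : Cmod (gi N u - z0) >= Rm + 1).
  { rewrite G1. fold dd. apply Rle_ge. apply Rmult_le_reg_r with (/ dd). apply Rinv_0_lt_compat; lra.
    rewrite Rmult_assoc, Rinv_r by lra. unfold Rdiv in HN. lra. }
  destruct (dich N) as [HA|[m [Hm [H1 H2]]]].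
  - destruct (stab N) as [del [Hdel Hb]]. { intros j Hj. specialize (HA j Hj). lra. }
    pose proof (p109 N).
    destruct (ball_some u (Rmin del (1 / (10/9)^N))) as [eps [He Hball]].
    { apply Rmin_glb_lt; auto. apply Rdiv_lt_0_compat; lra. }
    destruct (HC eps He) as [y [Py Hc]]. destruct (Hball _ Hc) as [v [-> Hv]].
    rewrite Cmod_sub_sym in Hv.
    pose proof (Rmin_l del (1 / (10/9)^N)) as Hm1. pose proof (Rmin_r del (1 / (10/9)^N)) as Hm2.
    destruct (Pset_char _ Py) as [v' [n [Hv' [Hlt Heq]]]]. injection Hv' as <-.
    destruct (Compare_dec.le_lt_dec n N) as [HnN|HnN].
    + assert (Cmod (gi n v) > 1/2). { apply (Hb v ltac:(lra) n HnN). apply HA. auto. }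
      lra.
    + assert (Hc1 : Cmod (gi N v - gi N u) < 1).
      { rewrite G2. apply Rmult_lt_reg_r with (/ (10/9)^N). apply Rinv_0_lt_compat; lra.
        replace ((10/9)^N * Cmod (v - u) * / (10/9)^N) with (Cmod (v - u)) by (field; lra).
        unfold Rdiv in Hm2. lra. }
      pose proof (tri3 (gi N u) (gi N v) z0) as Ht3.
      rewrite (Cmod_sub_sym (gi N u) (gi N v)) in Ht3.
      assert (HvN : Cmod (gi N v - z0) > Rm) by lra.
      assert (Hge : Cmod (gi n v - z0) >= Cmod (gi N v - z0)).
      { rewrite !G1. apply Rle_ge. apply Rmult_le_compat_r. apply Cmod_ge_0.
        apply p109_mono. lia. }
      pose proof (Cmod_sub_ge (gi n v - z0) (RtoC 0 - z0)) as Hsg.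
      replace (gi n v - z0 - (RtoC 0 - z0))%C with (gi n v) in Hsg by ring.
      replace (RtoC 0 - z0)%C with (- z0)%C in Hsg by ring. rewrite Cmod_opp in Hsg.
      unfold Rm in HvN. lra.
  - destruct (stab m) as [del [Hdel Hb]].
    { intros j Hj. destruct (Nat.eq_dec j m) as [->|]. lra. specialize (H1 j ltac:(lia)). lra. }
    destruct (ball_some u del) as [eps [He Hball]]; auto.
    destruct (HC eps He) as [y [Py Hc]]. destruct (Hball _ Hc) as [v [-> Hv]].
    rewrite Cmod_sub_sym in Hv.
    destruct (Pset_char _ Py) as [v' [n [Hv' [Hlt Heq]]]]. injection Hv' as <-.
    destruct (Compare_dec.le_lt_dec n m) as [Hnm|Hnm].
    + destruct (Nat.eq_dec n m) as [->|Hne].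
      * assert (Cmod (gi m v) < 1/2) by (apply (Hb v Hv m ltac:(lia)); auto). lra.
      * assert (Cmod (gi n v) > 1/2) by (apply (Hb v Hv n ltac:(lia)); apply H1; lia). lra.
    + specialize (Hlt m Hnm).
      assert (Cmod (gi m v) < 1/2) by (apply (Hb v Hv m ltac:(lia)); auto). lra.
Qed.
End Main.


Lemma mob_id_apply x : mob_apply mob_id x = x.
Proof.
  destruct x as [z|]; unfold mob_apply, mob_id; simpl; destruct (Ceq_dec _ _) as [e|e]; auto.
  - exfalso. apply (f_equal fst) in e. unfold Cmult, Cplus in e; simpl in e. lra.
  - f_equal. field.
  - now destruct e.
Qed.

Lemma f2c_fix : f2c z0 = z0.
Proof.
  pose proof (f2c_z0 z0). replace (z0 - z0)%C with (RtoC 0) in H by ring.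
  replace (f2c z0) with ((f2c z0 - z0) + z0)%C by ring. rewrite H. ring.
Qed.

Lemma BF_BBF x : BF Fex x -> BBF Fex x.
Proof.
  intros H eps He. exists x. split. exists 0%nat, []. simpl. auto. rewrite chord_self. auto.
Qed.

Lemma part1 : ptype Fex 1 (Some (RtoC 0)) elliptic_m.
Proof.
  exists [0%nat]. split; [|split].
  - split; [lia|]. split; auto. split.
    + simpl. split; [lia|]. split; auto. exists (RtoC 0). rewrite Cmod_0. split; auto; lra.
    + cbn [push]. change (fn Fex 0) with f1. rewrite f1_some. f_equal. ring.
  - intros [_ [eps [He H]]].
    set (r := Rmin (1/4) (eps/4)).
    assert (Hr1 : r <= 1/4) by apply Rmin_l. assert (Hr2 : r <= eps/4) by apply Rmin_r.
    assert (Hr0 : 0 < r) by (apply Rmin_glb_lt; lra).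
    destruct (H (Some (RtoC r))) as [ks [Hl [Hi Hp]]].
    { eapply Rle_lt_trans; [apply chord_le|].
      replace (RtoC 0 - RtoC r)%C with (- RtoC r)%C by ring. rewrite Cmod_opp, Cmod_R, Rabs_pos_eq; lra. }
    destruct ks as [|k [|k' ks]]; simpl in Hl; try lia.
    assert (HR1 : Reg1 (Some (RtoC r))).
    { exists (RtoC r). split; auto. rewrite Cmod_R, Rabs_pos_eq; lra. }
    destruct Hi as [Hk [Hr _]]. destruct k as [|k].
    + cbn [push] in Hp. change (fn Fex 0) with f1 in Hp. rewrite f1_some, omega_eq in Hp. injection Hp as Hp1 Hp2.
      pose proof s3_pos. nra.
    + apply (Reg1_not_Reg2 _ HR1). exact Hr.
  - assert (E : mob_mult (Defs.comp Fex [0%nat]) (Some (RtoC 0)) = omega).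
    { unfold mob_mult, Defs.comp, mob_comp, mob_id, mdet; simpl. field. }
    rewrite E. split. apply Cmod_omega. apply omega_neq1.
Qed.

Lemma mdet_f1 : mdet f1 = omega.
Proof. unfold mdet, f1; simpl. ring. Qed.

Lemma part2 : rotation_domain Fex Reg1.
Proof.
  split.
  - split; [|split; [|split]].
    + exists (Some (RtoC 0)). exists (RtoC 0). rewrite Cmod_0. split; auto; lra.
    + intros x Hx. apply Reg1_notBBF; auto.
    + apply Reg1_connected.
    + intros W HW Wc Hsub x Wx.
      destruct (Wc Reg1 Reg2 Reg1_open Reg2_open) as [Hc|Hc].
      * intros y Wy. apply RF_iff. apply NNPP. intros Hn. apply (HW y Wy). apply BF_BBF. exact Hn.
      * intros y _ H1 H2. exact (Reg1_not_Reg2 _ H1 H2).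
      * exfalso. assert (R0 : Reg1 (Some (RtoC 0))).
        { exists (RtoC 0). rewrite Cmod_0. split; auto; lra. }
        exact (Hc _ (Hsub _ R0) R0).
      * pose proof (HW x Wx) as Hb.
        assert (RF Fex x). { apply NNPP. intros Hn. apply Hb. apply BF_BBF. exact Hn. }
        apply RF_iff in H. destruct H; auto. exfalso; exact (Hc x Wx H).
  - exists 1%nat, f1. split; [lia|]. split; [|split].
    + split. rewrite mdet_f1. apply omega_neq0.
      exists mob_id, omega. split; [|split; [|split]].
      * unfold mdet, mob_id; simpl. intro E. apply (f_equal fst) in E.
        unfold Cmult, Cminus, Cplus, Copp in E; simpl in E. lra.
      * apply Cmod_omega.
      * apply omega_neq1.
      * intros x. rewrite !mob_id_apply. reflexivity.
    + intros x Hx. split.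
      * exists [0%nat]. split; [reflexivity|]. split; [|reflexivity]. cbn [itin].
        split; [simpl; lia|]. split; auto.
      * apply Reg1_f1; auto.
    + intros y [w [-> Hw]]. exists (Some (w / omega)%C). split.
      * exists (w / omega)%C. split; auto. rewrite Cmod_div by apply omega_neq0.
        rewrite Cmod_omega. lra.
      * rewrite f1_some. f_equal. field. apply omega_neq0.
Qed.

Lemma Cmod_z0_34 : Cmod z0 > 3/4.
Proof. pose proof Cmod_z0_sq. pose proof (Cmod_ge_0 z0). nra. Qed.

Lemma part3 : ptype Fex 1 (Some z0) repelling_m.
Proof.
  exists [1%nat]. split; [|split].
  - split; [lia|]. split; auto. split.
    + simpl. split; [lia|]. split; auto. change (regEx 1) with Reg2.
      apply Reg2_iff. right. exists z0. split; auto. apply Cmod_z0_gt.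
    + cbn [push]. change (fn Fex 1) with f2. rewrite f2_some, f2c_fix. auto.
  - intros [_ [eps [He H]]].
    set (r := Rmin (1/4) (eps/4)).
    assert (Hr1 : r <= 1/4) by apply Rmin_l. assert (Hr2 : r <= eps/4) by apply Rmin_r.
    assert (Hr0 : 0 < r) by (apply Rmin_glb_lt; lra).
    destruct (H (Some (z0 + RtoC r)%C)) as [ks [Hl [Hi Hp]]].
    { eapply Rle_lt_trans; [apply chord_le|].
      replace (z0 - (z0 + RtoC r))%C with (- RtoC r)%C by ring. rewrite Cmod_opp, Cmod_R, Rabs_pos_eq; lra. }
    destruct ks as [|k [|k' ks]]; simpl in Hl; try lia.
    destruct Hi as [Hk [Hr _]]. destruct k as [|k].
    + destruct Hr as [w [Hw Hw2]]. injection Hw as <-.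
      pose proof (Cmod_sub_ge z0 (RtoC 0 - RtoC r)).
      replace (z0 - (RtoC 0 - RtoC r))%C with (z0 + RtoC r)%C in H0 by ring.
      replace (RtoC 0 - RtoC r)%C with (- RtoC r)%C in H0 by ring.
      rewrite Cmod_opp, Cmod_R, Rabs_pos_eq in H0 by lra. pose proof Cmod_z0_34. lra.
    + cbn [push] in Hp. change (fn Fex (S k)) with f2 in Hp. rewrite f2_some in Hp.
      assert (Hp' : f2c (z0 + RtoC r) = (z0 + RtoC r)%C) by congruence.
      pose proof (f2c_z0 (z0 + RtoC r)). rewrite Hp' in H0.
      replace (z0 + RtoC r - z0)%C with (RtoC r) in H0 by ring.
      rewrite lam_eq in H0. apply (f_equal fst) in H0. unfold Cmult, Copp, RtoC in H0. simpl in H0. nra.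
  - assert (E : mob_mult (Defs.comp Fex [1%nat]) (Some z0) = (- lam)%C).
    { unfold mob_mult, Defs.comp, mob_comp, mob_id, mdet; simpl. field. }
    rewrite E. unfold repelling_m. rewrite Cmod_opp, Cmod_lam. lra.
Qed.

Lemma alpha_iff x : alphaF Fex x <-> x = Some z0.
Proof.
  split.
  - intros [HB Hn]. destruct x as [u|].
    + destruct (Rtotal_order (Cmod u) (1/2)) as [Hl|[Hl|Hl]].
      * exfalso. apply (Reg1_notBBF (Some u)); auto. exists u; auto.
      * exfalso. apply Hn. exists 0%nat, []. simpl. split; auto. split; auto. apply BF_iff. eauto.
      * destruct (Ceq_dec u z0) as [->|Hne]; auto. exfalso.
        apply (main_not_closure u Hl Hne Hn HB).
    + exfalso. rewrite BBF_eq in HB.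
      set (Rr := 2 * Cmod z0 + 1/2). pose proof (Cmod_ge_0 z0).
      assert (He : 0 < 2 / sqrt (1 + Rr ^ 2)). { apply Rdiv_lt_0_compat; [lra| apply sqrt_lt_R0; nra]. }
      destruct (HB _ He) as [y [Py Hc]].
      destruct (Pset_char _ Py) as [v [n [-> [_ Heq]]]].
      apply chord_None_big in Hc; [|unfold Rr; lra].
      pose proof (G1 n v). pose proof (p109 n).
      pose proof (Cmod_sub_ge v z0).
      assert (Cmod (gi n v - z0) >= Cmod (v - z0)).
      { rewrite H0. pose proof (Cmod_ge_0 (v - z0)). nra. }
      pose proof (Cmod_sub_ge (gi n v - z0) (RtoC 0 - z0)) as Hsg.
      replace (gi n v - z0 - (RtoC 0 - z0))%C with (gi n v) in Hsg by ring.
      replace (RtoC 0 - z0)%C with (- z0)%C in Hsg by ring. rewrite Cmod_opp in Hsg.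
      unfold Rr in Hc. lra.
  - intros ->. split. apply z0_closure. apply z0_notP.
Qed.

Lemma part5 : alpha_expanding Fex.
Proof.
  exists 1%nat. split; [lia|]. intros x ks Ha Hl Hi. apply alpha_iff in Ha. subst x.
  destruct ks as [|k [|k' ks]]; simpl in Hl; try lia.
  destruct Hi as [Hk [Hr _]]. destruct k as [|k].
  - exfalso. destruct Hr as [w [Hw Hw2]]. injection Hw as <-. pose proof Cmod_z0_gt. lra.
  - change (Defs.comp Fex [S k]) with (mob_comp mob_id f2). unfold sph_deriv.
    replace (ma (mob_comp mob_id f2) * z0 + mb (mob_comp mob_id f2))%C with z0.
    2: { rewrite <- f2c_fix at 1. unfold f2c, mob_comp, mob_id, f2; simpl. ring. }
    replace (mc (mob_comp mob_id f2) * z0 + md (mob_comp mob_id f2))%C with (RtoC 1).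
    2: { unfold mob_comp, mob_id, f2; simpl. ring. }
    replace (mdet (mob_comp mob_id f2)) with (- lam)%C.
    2: { unfold mdet, mob_comp, mob_id, f2; simpl. ring. }
    rewrite Cmod_opp, Cmod_lam, Cmod_R, Rabs_R1. pose proof (Cmod_ge_0 z0).
    replace (10 / 9 * (1 + Cmod z0 ^ 2) / (Cmod z0 ^ 2 + 1 ^ 2)) with (10/9) by (field; nra).
    lra.
Qed.

Theorem mainTheorem6 :
  ptype Fex 1 (Some (RtoC 0)) elliptic_m /\
  rotation_domain Fex Reg1 /\
  ptype Fex 1 (Some z0) repelling_m /\
  (forall x, alphaF Fex x <-> x = Some z0) /\
  alpha_expanding Fex /\
  ~ hyperbolic Fex.
Proof.
  split; [apply part1|]. split; [apply part2|]. split; [apply part3|].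
  split; [apply alpha_iff|]. split; [apply part5|].
  intros [_ [Hn _]]. apply Hn. exists 1%nat, (Some (RtoC 0)). apply part1.
Qed.
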